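(* Let $G$ be a locally compact abelian group and let $\mu\in M(G)$ be a real-valued (signed) measure that is antisymmetric, i.e. $\mu(-A)=-\mu(A)$ for every Borel set $A\subset G$. Let $\mu=\mu^+-\mu^-$ be its Jordan decomposition and let $A^+,A^-$ be a Hahn decomposition for $\mu$. Set $V=A^+\cap(-A^-)$. Then $V\cap(-V)=\emptyset$; for every Borel set $E\subset G$, $$\mu^+(E)=\mu(E\cap A^+)=\mu(E\cap V),\qquad \mu^-(E)=-\mu(E\cap A^-)=-\mu(E\cap(-V));$$ and $$\mu^+(V)=\|\mu^+\|=\|\mu^-\|=\mu^-(-V)=\tfrac12\|\mu\|.$$
   Context: $M(G)$ is the space of bounded regular complex Borel measures on $G$ with total variation norm $\|\cdot\|$. For a Borel set $A$, $-A=\{x\in G:-x\in A\}$. The Jordan decomposition of a signed measure $\mu$ is the unique representation $\mu=\mu^+-\mu^-$ with $\mu^+,\mu^-$ mutually singular nonnegative measures in $M(G)$; a Hahn decomposition is a pair of disjoint Borel sets $A^+,A^-$ with $A^+\cup A^-=G$ such that $\mu^+(A^-)=\mu^-(A^+)=0$, equivalently $A^+$ is a positive set and $A^-$ a negative set for $\mu$, and then $\mu^+(E)=\mu(E\cap A^+)$, $\mu^-(E)=-\mu(E\cap A^-)$. *)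

(* Defs.v *)
From HB Require Import structures.
From mathcomp Require Import all_boot all_order all_algebra.
From mathcomp Require Import all_classical all_reals all_analysis.
Set Implicit Arguments. Unset Strict Implicit. Unset Printing Implicit Defensive.
Import Order.TTheory GRing.Theory Num.Theory.
Local Open Scope classical_set_scope.
Local Open Scope ring_scope.

Section BorelSpace.
Variable G : topologicalZmodType.
Definition Borel : Type := G.
HB.instance Definition _ := Choice.on Borel.
HB.instance Definition _ := isPointed.Build Borel 0.
Lemma Borel_sigma_algebraC (A : set Borel) :
  <<s @open G >> A -> <<s @open G >> (~` A).
Proof. by move=> sGA; rewrite -setTD; exact: sigma_algebraCD. Qed.
HB.instance Definition _ := @isMeasurable.Build (sigma_display (@open G))
  Borel <<s @open G >> (@sigma_algebra0 _ setT (@open G)) Borel_sigma_algebraC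
  (@sigma_algebra_bigcup _ setT (@open G)).
End BorelSpace.

Definition negset (G : zmodType) (A : set G) : set G := [set x | A (- x)].

Definition total_variation d (T : measurableType d) (R : realType)
    (nu : set T -> \bar R) (E : set T) : \bar R :=
  ereal_sup [set x | exists (n : nat) (F : 'I_n -> set T),
    [/\ (forall i, measurable (F i)), trivIset setT F,
        \bigcup_(i in setT) F i = E & x = (\sum_(i < n) `|nu (F i)|)%E]].

Definition tv_norm d (T : measurableType d) (R : realType)
    (nu : set T -> \bar R) : \bar R := total_variation nu setT.

Definition regular_charge (G : topologicalZmodType) (R : realType)
    (nu : set (Borel G) -> \bar R) : Prop :=
  forall E : set (Borel G), measurable E ->
    total_variation nu E =
      ereal_inf [set total_variation nu U | U in [set U : set G | open U /\ E `<=` U]]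
    /\ total_variation nu E =
      ereal_sup [set total_variation nu K | K in [set K : set G | compact K /\ K `<=` E]].

Definition jordan_decomposition d (T : measurableType d) (R : realType)
    (nu : {charge set T -> \bar R})
    (nup nun : {finite_measure set T -> \bar R}) : Prop :=
  (forall A, measurable A -> nu A = (nup A - nun A)%E) /\
  exists S : set T, [/\ measurable S, nup (~` S) = 0%E & nun S = 0%E].

(* Main.v *)
Require Import Defs.
From HB Require Import structures.
From mathcomp Require Import all_boot all_order all_algebra.
From mathcomp Require Import all_classical all_reals all_analysis.
From mathcomp Require Import lra.
Import Order.TTheory GRing.Theory Num.Theory.
Local Open Scope classical_set_scope.
Local Open Scope ring_scope.
Local Open Scope ereal_scope.

Lemma negset_measurable (G : topologicalZmodType) (A : set (Borel G)) :
  measurable A -> measurable (negset A : set (Borel G)).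
Proof.
move=> mA.
pose S := [set B : set (Borel G) | measurable (negset B : set (Borel G))].
have hS : sigma_algebra setT S.
  split.
  - rewrite /S /=. have -> : negset (set0 : set (Borel G)) = set0 by apply/seteqP; split.
    exact: measurable0.
  - move=> B; rewrite /S /= => mB.
    have -> : negset (setT `\` B) = setT `\` negset B by apply/seteqP; split.
    exact: measurableD.
  - move=> F hF; rewrite /S /=.
    have -> : negset (\bigcup_k F k) = \bigcup_k negset (F k) by apply/seteqP; split.
    exact: bigcupT_measurable.
have hO : @open G `<=` S.
  move=> U oU; rewrite /S /=.
  apply: sub_sigma_algebra.
  exact: (proj1 (continuousP _) (@opp_continuous G)).
exact: (mA S (conj hS hO)).
Qed.

Lemma negsetK (G : zmodType) (A : set G) : negset (negset A) = A.
Proof. by apply/seteqP; split=> x /=; rewrite /negset /= opprK. Qed.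

Lemma bigcup_ordT T n (F : 'I_n -> set T) :
  \bigcup_(i in setT) F i = \big[setU/set0]_(i < n) F i.
Proof.
rewrite -bigcup_seq; congr (\bigcup_(i in _) _).
by apply/seteqP; split=> i //= _; rewrite mem_index_enum.
Qed.

Lemma null_part d (T : measurableType d) (R : realType)
  (m1 m2 : {finite_measure set T -> \bar R}) (S X : set T) :
  measurable S -> measurable X -> m1 (~` S) = 0 -> m2 S = 0 ->
  (forall Y, measurable Y -> Y `<=` X -> m1 Y - m2 Y <= 0) -> m1 X = 0.
Proof.
move=> mS mX h1S h2S H.
transitivity (m1 (X `\` S) + m1 (X `&` S)); first exact: measureDI.
have e1 : m1 (X `\` S) = 0.
  apply/eqP; rewrite eq_le measure_ge0 andbT -h1S.
  apply: le_measure; rewrite ?inE; [exact: measurableD|exact: measurableC|].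
  by move=> x [].
have e2 : m2 (X `&` S) = 0.
  apply/eqP; rewrite eq_le measure_ge0 andbT -h2S.
  apply: le_measure; rewrite ?inE; [exact: measurableI|exact: mS|].
  by move=> x [].
have := H (X `&` S) (measurableI _ _ mX mS) (@subIsetl _ _ _).
rewrite e2 sube0 => h; rewrite e1 add0e.
by apply/le_anti; rewrite h measure_ge0.
Qed.

Lemma tv_charact d (T : measurableType d) (R : realType) (nu : set T -> \bar R) (M : \bar R) :
  (forall n (F : 'I_n -> set T), (forall i, measurable (F i)) -> trivIset setT F ->
     \bigcup_(i in setT) F i = setT -> \sum_(i < n) `|nu (F i)| <= M) ->
  (exists n (F : 'I_n -> set T), [/\ (forall i, measurable (F i)), trivIset setT F,
     \bigcup_(i in setT) F i = setT & M = \sum_(i < n) `|nu (F i)|]) ->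
  tv_norm nu = M.
Proof.
move=> hub hex; apply/le_anti/andP; split.
  by apply: ge_ereal_sup => x [n [F [mF tF UF ->]]]; exact: hub.
by apply: ereal_sup_ubound; exact: hex.
Qed.

Lemma fm_partition d (T : measurableType d) (R : realType)
  (m : {finite_measure set T -> \bar R}) n (F : 'I_n -> set T) :
  (forall i, measurable (F i)) -> trivIset setT F ->
  \bigcup_(i in setT) F i = setT -> \sum_(i < n) m (F i) = m setT.
Proof.
move=> mF tF UF.
rewrite -measure_semi_additive_ord //; first by rewrite -bigcup_ordT UF.
by rewrite -bigcup_ordT UF.
Qed.

Lemma tv_fm d (T : measurableType d) (R : realType)
  (m : {finite_measure set T -> \bar R}) : tv_norm m = m setT.
Proof.
apply: tv_charact.
  move=> n F mF tF UF; rewrite -(@fm_partition _ _ _ m _ _ mF tF UF).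
  by apply: lee_sum => i _; rewrite gee0_abs.
exists 1%N, (fun=> setT); split => //.
- by move=> i j _ _ _; rewrite !ord1.
- by apply/seteqP; split=> x // _; exists ord0.
- by rewrite big_ord1 gee0_abs.
Qed.

Theorem lemma1 (R : realType) (G : topologicalZmodType)
  (hG : hausdorff_space G) (lcG : locally_compact [set: G])
  (mu : {charge set Borel G -> \bar R}) (mu_reg : regular_charge mu)
  (mu_anti : forall A : set (Borel G), measurable A -> mu (negset A) = - mu A)
  (mup mun : {finite_measure set Borel G -> \bar R})
  (Hjordan : jordan_decomposition mu mup mun)
  (Ap An : set (Borel G)) (Hhahn : hahn_decomposition mu Ap An) :
  let V := Ap `&` negset An in
  [/\ V `&` negset V = set0,
      (forall E : set (Borel G), measurable E ->
        [/\ mup E = mu (E `&` Ap), mu (E `&` Ap) = mu (E `&` V),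
            mun E = - mu (E `&` An) & - mu (E `&` An) = - mu (E `&` negset V)])
    & [/\ mup V = tv_norm mup, tv_norm mup = tv_norm mun,
          tv_norm mun = mun (negset V)
        & mun (negset V) = (2^-1)%:E * tv_norm mu]].
Proof.
move=> V.
case: Hhahn => [[mAp Ppos] [mAn Nneg] ApAnT ApAn0].
case: Hjordan => [Hj [S [mS hupS hunS]]].
have mnAp : measurable (negset Ap : set (Borel G)) by exact: negset_measurable.
have mnAn : measurable (negset An : set (Borel G)) by exact: negset_measurable.
have mV : measurable V by exact: measurableI.
have mnV : measurable (negset V : set (Borel G)) by exact: negset_measurable.
have V0 : V `&` negset V = set0.
  apply/seteqP; split=> // x [[xAp nxAn] [nxAp xAn]].
  have : (Ap `&` An) (@GRing.opp G x) by []. by rewrite ApAn0.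
have nullP : forall F : set (Borel G), measurable F -> F `<=` Ap `&` negset Ap -> mu F = 0.
  move=> F mF sF; apply/le_anti/andP; split; last first.
    by apply: (Ppos) => // x /sF [].
  have mnF : measurable (negset F : set (Borel G)) by exact: negset_measurable.
  have : 0 <= mu (negset F).
    apply: (Ppos) => // x /sF [_]; by rewrite /negset /= opprK.
  by rewrite mu_anti // oppe_ge0.
have nullN : forall F : set (Borel G), measurable F -> F `<=` An `&` negset An -> mu F = 0.
  move=> F mF sF; apply/le_anti/andP; split.
    by apply: (Nneg) => // x /sF [].
  have mnF : measurable (negset F : set (Borel G)) by exact: negset_measurable.
  have : mu (negset F) <= 0.
    apply: (Nneg) => // x /sF [_]; by rewrite /negset /= opprK.
  by rewrite mu_anti // oppe_le0.
have mupAn : forall E, measurable E -> mup (E `&` An) = 0.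
  move=> E mE; apply: (@null_part _ _ _ mup mun S (E `&` An) mS) => //; first exact: measurableI.
  move=> Y mY sY; rewrite -Hj //; apply: (Nneg) => // x /sY []//.
have munAp : forall E, measurable E -> mun (E `&` Ap) = 0.
  move=> E mE; apply: (@null_part _ _ _ mun mup (~` S) (E `&` Ap)) => //.
  - exact: measurableC.
  - exact: measurableI.
  - by rewrite setCK.
  - move=> Y mY sY.
    have hY := Hj Y mY.
    have f1 : mup Y \is a fin_num by exact: fin_num_measure.
    have f2 : mun Y \is a fin_num by exact: fin_num_measure.
    have : 0 <= mu Y by apply: (Ppos) => // x /sY [].
    rewrite hY.
    move: f1 f2; case: (mup Y) => // a _; case: (mun Y) => // b _.
    rewrite !lee_fin; lra.
have hU : forall y, Ap y \/ An y.
  by move=> y; have : (Ap `|` An) y by rewrite ApAnT.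
have hD : forall y, Ap y -> An y -> False.
  by move=> y a b; have : (Ap `&` An) y by []; rewrite ApAn0.
have EAp : forall E : set (Borel G), E `\` Ap = E `&` An.
  move=> E; apply/seteqP; split=> x [Ex h]; split => //.
    by case: (hU x).
  by move=> a; exact: hD a h.
have hb : forall E, measurable E -> mup E = mu (E `&` Ap).
  move=> E mE; rewrite Hj; last exact: measurableI.
  rewrite munAp // sube0.
  transitivity (mup (E `\` Ap) + mup (E `&` Ap)); first exact: measureDI.
  by rewrite EAp mupAn // add0e.
have hd : forall E, measurable E -> mun E = - mu (E `&` An).
  move=> E mE; rewrite Hj; last exact: measurableI.
  rewrite mupAn // sub0e oppeK.
  transitivity (mun (E `\` Ap) + mun (E `&` Ap)); first exact: measureDI.
  by rewrite EAp munAp // adde0.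
have hc : forall E, measurable E -> mu (E `&` Ap) = mu (E `&` V).
  move=> E mE.
  rewrite (chargeDI mu (measurableI _ _ mE mAp) mnAp).
  rewrite (nullP (E `&` Ap `&` negset Ap)); last 2 first.
  - by apply: measurableI => //; apply: measurableI.
  - by move=> x [[_ a] b].
  rewrite adde0; congr (mu _).
  apply/seteqP; split=> x /=.
    move=> [[Ex a] b]; split => //; split => //.
    by case: (hU (@GRing.opp G x)).
  move=> [Ex [a b]]; split => //; move=> c.
  exact: (hD (@GRing.opp G x)).
have he : forall E, measurable E -> mu (E `&` An) = mu (E `&` negset V).
  move=> E mE.
  rewrite (chargeDI mu (measurableI _ _ mE mAn) mnAn).
  rewrite (nullN (E `&` An `&` negset An)); last 2 first.
  - by apply: measurableI => //; apply: measurableI.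
  - by move=> x [[_ a] b].
  rewrite adde0; congr (mu _).
  apply/seteqP; split=> x /=.
    move=> [[Ex a] b]; split => //; split => //.
      by case: (hU (@GRing.opp G x)).
    by rewrite /negset /= opprK.
  move=> [Ex [a b]]; move: b; rewrite /negset /= opprK => b.
  split => //; move=> c.
  exact: (hD (@GRing.opp G x)).
have mT : measurable (setT : set (Borel G)) by exact: measurableT.
have eVp : mup V = mu V by rewrite hb // hc // setIid.
have eTp : mup setT = mu V by rewrite hb // hc // setTI.
have eTn : mun setT = mu V by rewrite hd // he // setTI mu_anti // oppeK.
have eVn : mun (negset V) = mu V by rewrite hd // he // setIid mu_anti // oppeK.
have tvmu : tv_norm mu = mup setT + mun setT.
  apply: tv_charact.
    move=> n F mF tF UF.
    rewrite -(@fm_partition _ _ _ mup _ _ mF tF UF).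
    rewrite -(@fm_partition _ _ _ mun _ _ mF tF UF).
    rewrite -big_split /=; apply: lee_sum => i _.
    rewrite Hj //.
    apply: le_trans (lee_abs_sub _ _) _.
    by rewrite !gee0_abs.
  exists 2%N, (fun i : 'I_2 => if val i == 0%N then Ap else An); split.
  - by move=> i; case: ifP.
  - move=> [[|[|i]] hi] [[|[|j]] hj] _ _ //=.
    + by move=> _; apply/val_inj.
    + by move=> [x [a b]]; case: (hD x).
    + by move=> [x [a b]]; case: (hD x).
    + by move=> _; apply/val_inj.
  - apply/seteqP; split=> x // _.
    case: (hU x) => h; first by exists ord0.
    by exists (lift ord0 ord0).
  - rewrite !big_ord_recl big_ord0 /= adde0.
    rewrite gee0_abs; last exact: (Ppos).
    rewrite lee0_abs; last exact: (Nneg).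
    by rewrite (hb _ mT) (hd _ mT) !setTI.
split => //.
  by move=> E mE; split; [exact: hb|exact: hc|exact: hd|rewrite he].
split; rewrite ?tv_fm //.
- exact: (etrans eVp (esym eTp)).
- exact: (etrans eTp (esym eTn)).
- exact: (etrans eTn (esym eVn)).
rewrite tvmu eTp eTn eVn.
have : mu V \is a fin_num by exact: fin_num_measure.
case: (mu V) => // r _.
rewrite -EFinD -EFinM; congr EFin; lra.
Qed.
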